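(* Let $\mathsf{MRK}$ be the axiom scheme $\neg\forall\alpha\mathsf{P}\to\exists\alpha\mathsf{P}^\bot$ for atomic $\mathsf{P}$. (1) Every instance of $\mathsf{MRK}$ is provable in $\mathsf{HA}+\mathsf{EM}_1^-$. (2) Conversely, the rule $\mathsf{EM}_1^-$ is derivable in $\mathsf{HA}+\mathsf{MRK}$: for atomic $\mathsf{P}$ and $C$, if $\Gamma,\forall\alpha\mathsf{P}\vdash\exists\beta C$ and $\Gamma,\exists\alpha\mathsf{P}^\bot\vdash\exists\beta C$ in $\mathsf{HA}+\mathsf{MRK}$, then $\Gamma\vdash\exists\beta C$ in $\mathsf{HA}+\mathsf{MRK}$.
   Context: $\mathsf{HA}$ is intuitionistic first-order arithmetic (Heyting arithmetic, in natural deduction) over $0,\mathsf{S},+,\cdot,=$ with the Peano axioms and induction scheme; atomic formulas are decidable and $\mathsf{P}^\bot$ denotes the complementary atomic predicate of $\mathsf{P}$ (so $\mathsf{P}^\bot\equiv\neg\mathsf{P}$). $\mathsf{HA}+\mathsf{EM}_1^-$ is $\mathsf{HA}$ extended with the rule $\mathsf{EM}_1^-$: from $\Gamma,\forall\alpha\mathsf{P}\vdash\exists\beta C$ and $\Gamma,\exists\alpha\mathsf{P}^\bot\vdash\exists\beta C$, with $\mathsf{P},C$ atomic, infer $\Gamma\vdash\exists\beta C$ (discharging the two hypotheses). $\mathsf{HA}+\mathsf{MRK}$ is $\mathsf{HA}$ with the instances of $\mathsf{MRK}$ as additional axioms. *)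

(* Defs.v *)
From Stdlib Require Import List.
Import ListNotations.

Inductive term : Type :=
| tvar  : nat -> term
| tzero : term
| tsucc : term -> term
| tplus : term -> term -> term
| tmult : term -> term -> term.

Inductive atom : Type :=
| AEq  : term -> term -> atom
| ANeq : term -> term -> atom.

Definition perp (P : atom) : atom :=
  match P with
  | AEq t s => ANeq t s
  | ANeq t s => AEq t s
  end.

Inductive formula : Type :=
| Atom : atom -> formula
| Bot  : formula
| And  : formula -> formula -> formula
| Or   : formula -> formula -> formula
| Imp  : formula -> formula -> formula
| Fa   : formula -> formula
| Ex   : formula -> formula.

Definition Neg (A : formula) : formula := Imp A Bot.

Fixpoint tsubst (sg : nat -> term) (t : term) : term :=
  match t with
  | tvar n => sg n
  | tzero => tzero
  | tsucc u => tsucc (tsubst sg u)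
  | tplus u v => tplus (tsubst sg u) (tsubst sg v)
  | tmult u v => tmult (tsubst sg u) (tsubst sg v)
  end.

Definition shift (n : nat) : term := tvar (S n).

Definition up (sg : nat -> term) (n : nat) : term :=
  match n with
  | 0 => tvar 0
  | S k => tsubst shift (sg k)
  end.

Definition asubst (sg : nat -> term) (a : atom) : atom :=
  match a with
  | AEq t s => AEq (tsubst sg t) (tsubst sg s)
  | ANeq t s => ANeq (tsubst sg t) (tsubst sg s)
  end.

Fixpoint fsubst (sg : nat -> term) (A : formula) : formula :=
  match A with
  | Atom a => Atom (asubst sg a)
  | Bot => Bot
  | And A B => And (fsubst sg A) (fsubst sg B)
  | Or A B => Or (fsubst sg A) (fsubst sg B)
  | Imp A B => Imp (fsubst sg A) (fsubst sg B)
  | Fa A => Fa (fsubst (up sg) A)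
  | Ex A => Ex (fsubst (up sg) A)
  end.

Definition flift (A : formula) : formula := fsubst shift A.

Definition inst_sub (t : term) (n : nat) : term :=
  match n with 0 => t | S k => tvar k end.
Definition inst (t : term) (A : formula) : formula := fsubst (inst_sub t) A.

Definition succ_sub (n : nat) : term :=
  match n with 0 => tsucc (tvar 0) | S k => tvar (S k) end.

Inductive system : Type := HA_EM1 | HA_MRK.

(* prf sys Gamma A : Gamma |- A in HA + EM1^- (sys = HA_EM1)
   or in HA + MRK (sys = HA_MRK), natural deduction. *)
Inductive prf (sys : system) : list formula -> formula -> Prop :=
| p_hyp : forall G A, In A G -> prf sys G A
| p_impI : forall G A B, prf sys (A :: G) B -> prf sys G (Imp A B)
| p_impE : forall G A B, prf sys G (Imp A B) -> prf sys G A -> prf sys G B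
| p_andI : forall G A B, prf sys G A -> prf sys G B -> prf sys G (And A B)
| p_andE1 : forall G A B, prf sys G (And A B) -> prf sys G A
| p_andE2 : forall G A B, prf sys G (And A B) -> prf sys G B
| p_orI1 : forall G A B, prf sys G A -> prf sys G (Or A B)
| p_orI2 : forall G A B, prf sys G B -> prf sys G (Or A B)
| p_orE : forall G A B C, prf sys G (Or A B) -> prf sys (A :: G) C ->
    prf sys (B :: G) C -> prf sys G C
| p_botE : forall G A, prf sys G Bot -> prf sys G A
| p_faI : forall G A, prf sys (map flift G) A -> prf sys G (Fa A)
| p_faE : forall G A t, prf sys G (Fa A) -> prf sys G (inst t A)
| p_exI : forall G A t, prf sys G (inst t A) -> prf sys G (Ex A)
| p_exE : forall G A B, prf sys G (Ex A) ->
    prf sys (A :: map flift G) (flift B) -> prf sys G B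
| p_refl : forall G t, prf sys G (Atom (AEq t t))
| p_leib : forall G t s A,
    prf sys G (Imp (Atom (AEq t s)) (Imp (inst t A) (inst s A)))
| p_neq1 : forall G t s,
    prf sys G (Imp (Atom (ANeq t s)) (Neg (Atom (AEq t s))))
| p_neq2 : forall G t s,
    prf sys G (Imp (Neg (Atom (AEq t s))) (Atom (ANeq t s)))
| p_succ0 : forall G t, prf sys G (Neg (Atom (AEq (tsucc t) tzero)))
| p_succinj : forall G t s,
    prf sys G (Imp (Atom (AEq (tsucc t) (tsucc s))) (Atom (AEq t s)))
| p_plus0 : forall G t, prf sys G (Atom (AEq (tplus t tzero) t))
| p_plusS : forall G t s,
    prf sys G (Atom (AEq (tplus t (tsucc s)) (tsucc (tplus t s))))
| p_mult0 : forall G t, prf sys G (Atom (AEq (tmult t tzero) tzero))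
| p_multS : forall G t s,
    prf sys G (Atom (AEq (tmult t (tsucc s)) (tplus (tmult t s) t)))
| p_ind : forall G A, prf sys G (inst tzero A) ->
    prf sys G (Fa (Imp A (fsubst succ_sub A))) -> prf sys G (Fa A)
| p_em1 : forall G (P C : atom), sys = HA_EM1 ->
    prf sys (Fa (Atom P) :: G) (Ex (Atom C)) ->
    prf sys (Ex (Atom (perp P)) :: G) (Ex (Atom C)) ->
    prf sys G (Ex (Atom C))
| p_mrk : forall G (P : atom), sys = HA_MRK ->
    prf sys G (Imp (Neg (Fa (Atom P))) (Ex (Atom (perp P)))).

(* Main.v *)
Require Import Defs.
From Stdlib Require Import List.
Import ListNotations.

Lemma incl_cons2 {X : Type} (a : X) (l l' : list X) :
  incl l l' -> incl (a :: l) (a :: l').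
Proof. intros H x [->|Hx]; simpl; auto. Qed.

Lemma weak : forall sys G A, prf sys G A -> forall G', incl G G' -> prf sys G' A.
Proof.
  induction 1; intros G' Hi.
  - apply p_hyp; auto.
  - apply p_impI; apply IHprf; apply incl_cons2; auto.
  - eapply p_impE; eauto.
  - apply p_andI; eauto.
  - eapply p_andE1; eauto.
  - eapply p_andE2; eauto.
  - apply p_orI1; eauto.
  - apply p_orI2; eauto.
  - eapply p_orE; [eauto | apply IHprf2 | apply IHprf3]; apply incl_cons2; auto.
  - apply p_botE; eauto.
  - apply p_faI; apply IHprf; apply incl_map; auto.
  - apply p_faE; eauto.
  - eapply p_exI; eauto.
  - eapply p_exE; [eauto|]. apply IHprf2. apply incl_cons2, incl_map; auto.
  - apply p_refl.
  - apply p_leib.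
  - apply p_neq1.
  - apply p_neq2.
  - apply p_succ0.
  - apply p_succinj.
  - apply p_plus0.
  - apply p_plusS.
  - apply p_mult0.
  - apply p_multS.
  - apply p_ind; eauto.
  - eapply p_em1; [assumption | apply IHprf1 | apply IHprf2]; apply incl_cons2; auto.
  - apply p_mrk; auto.
Qed.

Lemma tsubst_inst_up : forall t, tsubst (inst_sub (tvar 0)) (tsubst (up shift) t) = t.
Proof.
  induction t; simpl; try congruence.
  destruct n; reflexivity.
Qed.

Lemma asubst_inst_up : forall a, asubst (inst_sub (tvar 0)) (asubst (up shift) a) = a.
Proof. destruct a; simpl; rewrite !tsubst_inst_up; reflexivity. Qed.

Lemma perp_perp : forall a, perp (perp a) = a.
Proof. destruct a; reflexivity. Qed.

Lemma notExC : forall G C,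
  prf HA_MRK (Fa (Atom (perp C)) :: G) (Neg (Ex (Atom C))).
Proof.
  intros G C. apply p_impI.
  eapply p_exE; [apply p_hyp; left; reflexivity|].
  change (flift Bot) with Bot.
  assert (H : prf HA_MRK (Atom C :: map flift (Ex (Atom C) :: Fa (Atom (perp C)) :: G))
               (Atom (perp C))).
  { pose proof (p_faE HA_MRK (Atom C :: map flift (Ex (Atom C) :: Fa (Atom (perp C)) :: G))
      (Atom (asubst (up shift) (perp C))) (tvar 0)) as Hf.
    unfold inst in Hf. change (fsubst (inst_sub (tvar 0)) (Atom (asubst (up shift) (perp C)))) with (Atom (asubst (inst_sub (tvar 0)) (asubst (up shift) (perp C)))) in Hf. rewrite asubst_inst_up in Hf.
    apply Hf. apply p_hyp. simpl. right; right; left. reflexivity. }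
  destruct C as [t s | t s]; simpl in H.
  - eapply p_impE; [eapply p_impE; [apply p_neq1 | exact H]|].
    apply p_hyp; left; reflexivity.
  - eapply p_impE; [eapply p_impE; [apply p_neq1 | apply p_hyp; left; reflexivity]|].
    exact H.
Qed.

Theorem mainTheorem6 :
  (forall P : atom,
      prf HA_EM1 [] (Imp (Neg (Fa (Atom P))) (Ex (Atom (perp P))))) /\
  (forall (G : list formula) (P C : atom),
      prf HA_MRK (Fa (Atom P) :: G) (Ex (Atom C)) ->
      prf HA_MRK (Ex (Atom (perp P)) :: G) (Ex (Atom C)) ->
      prf HA_MRK G (Ex (Atom C))).
Proof.
  split.
  - intros P. apply p_impI. apply p_em1 with (P := P); [reflexivity| |].
    + apply p_botE. apply p_impE with (A := Fa (Atom P)); apply p_hyp; simpl; auto.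
    + apply p_hyp; left; reflexivity.
  - intros G P C H1 H2.
    set (G1 := Fa (Atom (perp C)) :: G).
    assert (NC : prf HA_MRK G1 (Neg (Ex (Atom C)))) by apply notExC.
    assert (Hb : prf HA_MRK G1 Bot).
    { assert (NP : prf HA_MRK G1 (Neg (Fa (Atom P)))).
      { apply p_impI. eapply p_impE.
        - eapply weak; [exact NC|]. intros x Hx; right; exact Hx.
        - eapply weak; [exact H1|]. intros x [->|Hx]; [left; reflexivity|].
          right; right; exact Hx. }
      assert (EP : prf HA_MRK G1 (Ex (Atom (perp P)))).
      { eapply p_impE; [apply p_mrk; reflexivity | exact NP]. }
      eapply p_impE; [exact NC|].
      eapply p_impE; [|exact EP].
      apply p_impI. eapply weak; [exact H2|].
      intros x [->|Hx]; [left; reflexivity|]. right; right; exact Hx. }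
    pose proof (p_mrk HA_MRK G (perp C) eq_refl) as M.
    rewrite perp_perp in M.
    eapply p_impE; [exact M|]. apply p_impI. exact Hb.
Qed.
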